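(* Let $G$ be a finite group with $|G| = mp^k$, where $p$ is a prime, $k \geq 1$, and $m$ is a natural number such that $m/q < p < m$, where $q$ is the smallest prime divisor of $m$. Then a Sylow $p$-subgroup of $G$ is either normal in $G$ or self-normalizing in $G$. *)

(* Defs.v *)
From mathcomp Require Import all_boot all_fingroup all_solvable.
Set Implicit Arguments. Unset Strict Implicit. Unset Printing Implicit Defensive.

(* Main.v *)
Require Import Defs.
From mathcomp Require Import all_boot all_fingroup all_solvable.
Set Implicit Arguments. Unset Strict Implicit. Unset Printing Implicit Defensive.
Local Open Scope group_scope.

Lemma div_pdiv_bound (m d : nat) : (d %| m)%N -> (1 < d)%N -> (m %/ d <= m %/ pdiv m)%N.
Proof.
move=> dm d1; apply: leq_div2l; first exact: pdiv_gt0.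
exact: pdiv_min_dvd.
Qed.

Theorem lemma1 (gT : finGroupType) (G : {group gT}) (p m k : nat)
  (hp : prime p) (hk : 0 < k) (hG : #|G| = (m * p ^ k)%N)
  (hlo : (m %/ pdiv m < p)%N) (hhi : (p < m)%N) :
  forall P : {group gT}, P \in 'Syl_p(G) -> P <| G \/ 'N_G(P) = P.
Proof.
move=> P; rewrite inE => sylP.
have m0 : (0 < m)%N by apply: leq_ltn_trans hhi.
have p0 : (0 < p)%N := prime_gt0 hp.
have npm : ~~ (p %| m)%N.
  apply/negP => /dvdnP [t Ht].
  have t1 : (1 < t)%N.
    rewrite ltnNge; apply/negP => tle; move: hhi; rewrite Ht.
    case: t tle {Ht} => [|[|]] //= _; rewrite ?mul0n ?mul1n ?ltnn //.
  have := div_pdiv_bound (m := m) (d := t).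
  rewrite Ht dvdn_mulr // => /(_ isT t1).
  rewrite mulKn ?(ltnW t1) // -Ht => /leq_ltn_trans /(_ hlo); rewrite ltnn.
  by [].
have cardP : #|P| = (p ^ k)%N.
  rewrite (card_Hall sylP) p_part hG lognM ?expn_gt0 ?p0 // pfactorK //.
  have -> : logn p m = 0%N.
    apply/eqP; rewrite -leqn0 leqNgt logn_gt0 mem_primes hp m0 /=.
    exact: npm.
  by [].
have sPN : P \subset 'N_G(P).
  by rewrite subsetI (pHall_sub sylP) normG.
set n := #|G : 'N_G(P)|.
set d := #|'N_G(P) : P|.
have hGN : (#|'N_G(P)| * n)%N = #|G| by apply: Lagrange; exact: subsetIl.
have hNP : (#|P| * d)%N = #|'N_G(P)| by apply: Lagrange.
have hm : m = (d * n)%N.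
  have pk : (0 < p ^ k)%N by rewrite expn_gt0 p0.
  apply/eqP; rewrite -(@eqn_pmul2r (p ^ k)) //.
  rewrite -hG -hGN -hNP cardP.
  by rewrite -mulnA mulnC.
have nmod : (n %% p = 1)%N by rewrite /n -(card_Syl sylP) card_Syl_mod.
case: (ltngtP n 1) => [n0|n1|n1].
- by move: n0; rewrite ltnS leqn0 => /eqP n0; move: hm m0; rewrite n0 muln0 => ->.
- case: (ltngtP d 1) => [d0|d1|d1].
  + by move: d0; rewrite ltnS leqn0 => /eqP d0; move: hm m0; rewrite d0 mul0n => ->.
  + exfalso.
    have ngt : (p < n)%N.
      rewrite ltnNge; apply/negP => np.
      case: (ltngtP n p) np => // [nlt|neq] _.
      * by move: nmod; rewrite modn_small // => nE; move: n1; rewrite nE ltnn.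
      * by move: nmod; rewrite neq modnn.
    have := div_pdiv_bound (m := m) (d := d).
    rewrite hm dvdn_mulr // => /(_ isT d1).
    rewrite mulKn; last by apply: leq_trans d1.
    rewrite -hm => H.
    by move: (leq_ltn_trans H hlo); rewrite ltnNge (ltnW ngt).
  + right; apply/eqP; rewrite eq_sym eqEcard sPN /=. by rewrite -hNP d1 muln1.
- left; rewrite /normal (pHall_sub sylP) /=.
  have : G \subset 'N_G(P) by rewrite -indexg_eq1 -/n n1.
  by move/subset_trans; apply; exact: subsetIr.
Qed.
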